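(* Let $r\geq 3$ be an integer and let $x,y$ be distinct vertices of a graph $G$. If $G$ contains an $r$-compatible set of four $xy$-paths, then $G$ contains $C_{2,r}$ as an immersion.
   Context: All graphs are finite and loopless but may have parallel edges. An $xy$-path is a path with ends $x$ and $y$, written starting at $x$. Two edge-disjoint $xy$-paths $Q_1=x_1,\ldots,x_s$ and $Q_2=y_1,\ldots,y_t$ are aligned if for every two internal vertices $u=x_{i_1}=y_{j_1}$, $v=x_{i_2}=y_{j_2}$ common to both, $(i_1-i_2)(j_1-j_2)>0$. A set of pairwise edge-disjoint $xy$-paths is $r$-compatible if some two of the paths are aligned and intersect in at least $r$ vertices (counting $x$ and $y$). Lifting a pair of adjacent edges $uv,vw$ means deleting them and adding a new edge $uw$ (if $u=w$ the loop is deleted). A graph $H$ is an immersion of $G$ if a graph isomorphic to $H$ can be obtained from a subgraph of $G$ by repeatedly lifting pairs of edges; equivalently, there is an injective map $V(H)\to V(G)$ and pairwise edge-disjoint paths of $G$ joining the images of the ends of each edge of $H$. $C_{t,r}$ denotes the graph obtained from a cycle on $r$ vertices by replacing each edge by $t$ parallel edges. *)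

(* Defs.v *)
From HB Require Import structures.
From mathcomp Require Import all_boot all_order all_algebra.
Set Implicit Arguments. Unset Strict Implicit. Unset Printing Implicit Defensive.
Import GRing.Theory Num.Theory.

(* Finite multigraphs: a finite vertex type, a finite edge type, and for each
   edge its (unordered) pair of ends, given as an ordered pair. Parallel edges
   are allowed; looplessness is a separate predicate. *)
Record mgraph := MGraph {
  vert : finType;
  edge : finType;
  ends : edge -> vert * vert }.

Definition loopless (G : mgraph) : Prop :=
  forall e : edge G, (ends e).1 != (ends e).2.

Definition joins (G : mgraph) (e : edge G) (u v : vert G) : bool :=
  (ends e == (u, v)) || (ends e == (v, u)).

(* A path is given by its vertex sequence and its edge sequence:
   vertices v_0 ... v_s (pairwise distinct), edges e_1 ... e_s, e_i joins v_{i-1} v_i. *)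
Definition gpath (G : mgraph) := (seq (vert G) * seq (edge G))%type.

Definition is_path (G : mgraph) (x y : vert G) (P : gpath G) : Prop :=
  [/\ size P.1 = (size P.2).+1,
      uniq P.1,
      head y P.1 = x,
      last x P.1 = y &
      all (fun p => joins p.1 p.2.1 p.2.2) (zip P.2 (zip P.1 (behead P.1)))].

Definition edge_disjoint (G : mgraph) (P Q : gpath G) : bool :=
  all (fun e => e \notin Q.2) P.2.

Definition internal (G : mgraph) (x y : vert G) (P : gpath G) (v : vert G) : bool :=
  [&& v \in P.1, v != x & v != y].

(* aligned xy-paths: positions (indices) of distinct common internal vertices
   have the same order in both paths, i.e. (i1 - i2)(j1 - j2) > 0. *)
Definition aligned (G : mgraph) (x y : vert G) (P Q : gpath G) : Prop :=
  forall u v : vert G, u != v ->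
    internal x y P u -> internal x y Q u ->
    internal x y P v -> internal x y Q v ->
    (0 < ((index u P.1)%:Z - (index v P.1)%:Z) * ((index u Q.1)%:Z - (index v Q.1)%:Z))%R.

(* number of vertices common to two paths (including the ends) *)
Definition n_common (G : mgraph) (P Q : gpath G) : nat :=
  #|[set v : vert G | (v \in P.1) && (v \in Q.1)]|.

Definition immersion (H G : mgraph) : Prop :=
  exists f : vert H -> vert G, injective f /\
  exists P : edge H -> gpath G,
    (forall e, is_path (f (ends e).1) (f (ends e).2) (P e)) /\
    (forall e1 e2, e1 != e2 -> edge_disjoint (P e1) (P e2)).

(* C_{t,r}: the cycle on vertices 'I_r (edges {i, i+1 mod r}), each edge
   replaced by t parallel edges. *)
Definition Ctr (t r : nat) : mgraph :=
  @MGraph 'I_r ('I_r * 'I_t)%type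
          (fun e => (e.1, ordS e.1)).

(* Main.v *)
Require Import Defs.
From HB Require Import structures.
From mathcomp Require Import all_boot all_order all_algebra.
From mathcomp Require Import zify.
Set Implicit Arguments. Unset Strict Implicit. Unset Printing Implicit Defensive.

Lemma path_nth (G : mgraph) (x y : vert G) (P : gpath G) : is_path x y P ->
  [/\ size P.1 = (size P.2).+1, uniq P.1, nth x P.1 0 = x, nth x P.1 (size P.2) = y &
      forall k e0, k < size P.2 -> joins (nth e0 P.2 k) (nth x P.1 k) (nth x P.1 k.+1)].
Proof.
case: P => vs es [Hs Hu Hh Hl Ha]; rewrite /= in Hs Hu Hh Hl Ha *; split => //.
- by case: vs Hs Hh Hu Hl Ha.
- by rewrite -[size es]/((size es).+1.-1) -Hs nth_last.
move=> k e0 Hk.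
have Hz : size es = size (zip vs (behead vs)) by rewrite size_zip size_behead Hs; lia.
move/(all_nthP (e0, (x, x))): Ha => /(_ k).
rewrite size_zip -Hz minnn => /(_ Hk).
rewrite (nth_zip _ _ _ Hz) /= nth_zip_cond -Hz Hk /=.
by rewrite nth_behead.
Qed.

Lemma nth_path (G : mgraph) (x y z : vert G) (P : gpath G) :
  size P.1 = (size P.2).+1 -> uniq P.1 -> nth z P.1 0 = x -> nth z P.1 (size P.2) = y ->
  (forall k e0, k < size P.2 -> joins (nth e0 P.2 k) (nth z P.1 k) (nth z P.1 k.+1)) ->
  is_path x y P.
Proof.
case: P => vs es Hs Hu Hh Hl Ha; rewrite /= in Hs Hu Hh Hl Ha *; split => //.
- by rewrite -(nth0 y) (set_nth_default z) // Hs.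
- by rewrite -nth_last Hs /= (set_nth_default z) // Hs.
have Hz : size es = size (zip vs (behead vs)) by rewrite size_zip size_behead Hs; lia.
rewrite /=; case E: es => [|e0 es']; first by case: (zip vs (behead vs)).
rewrite -E; apply/(all_nthP (e0, (x, x))) => k.
rewrite size_zip -Hz minnn => Hk.
rewrite (nth_zip _ _ _ Hz) /= nth_zip_cond -Hz Hk /=.
rewrite nth_behead (set_nth_default z); last by rewrite Hs; lia.
rewrite (set_nth_default z x); last by rewrite Hs; lia.
by apply: Ha.
Qed.

Definition seg (G : mgraph) (P : gpath G) (a b : nat) : gpath G :=
  (take (b - a).+1 (drop a P.1), take (b - a) (drop a P.2)).

Lemma seg_path (G : mgraph) (x y : vert G) (P : gpath G) a b :
  is_path x y P -> a <= b -> b <= size P.2 ->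
  is_path (nth x P.1 a) (nth x P.1 b) (seg P a b).
Proof.
move=> /path_nth [Hs Hu Hh Hl Ha] Hab Hb.
have S2 : size (seg P a b).2 = b - a by rewrite /= size_take size_drop; case: ifP; lia.
apply: (nth_path (z := x)).
- by rewrite S2 /= size_take size_drop Hs; case: ifP; lia.
- by rewrite /= take_uniq // drop_uniq.
- by rewrite /= nth_take // nth_drop addn0.
- by rewrite S2 /= nth_take // nth_drop; congr nth; lia.
move=> k e0; rewrite S2 => Hk /=.
rewrite !nth_take; try lia.
rewrite !nth_drop addnS; apply: Ha; lia.
Qed.

Definition revp (G : mgraph) (P : gpath G) : gpath G := (rev P.1, rev P.2).

Lemma joinsC (G : mgraph) (e : edge G) u v : joins e u v = joins e v u.
Proof. by rewrite /joins orbC. Qed.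

Lemma revp_path (G : mgraph) (x y : vert G) (P : gpath G) :
  is_path x y P -> is_path y x (revp P).
Proof.
move=> /path_nth [Hs Hu Hh Hl Ha].
apply: (nth_path (z := x)) => /=.
- by rewrite !size_rev.
- by rewrite rev_uniq.
- by rewrite nth_rev Hs // subn1.
- by rewrite size_rev nth_rev Hs ?subnn //; lia.
move=> k e0; rewrite size_rev => Hk.
rewrite !nth_rev ?Hs; try lia.
rewrite joinsC.
have -> : (size P.2).+1 - k.+2 = size P.2 - k.+1 by lia.
have -> : (size P.2).+1 - k.+1 = (size P.2 - k.+1).+1 by lia.
apply: Ha; lia.
Qed.

Lemma path_uniq_edges (G : mgraph) (x y : vert G) (P : gpath G) :
  is_path x y P -> uniq P.2.
Proof.
move=> /path_nth [Hs Hu Hh Hl Ha].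
case E: P.2 => [//|e0 s]; rewrite -E.
apply/(uniqP e0) => i j; rewrite !inE => Hi Hj Heq.
have J1 := Ha i e0 Hi; have J2 := Ha j e0 Hj.
rewrite Heq in J1.
have nu : forall a b, a <= size P.2 -> b <= size P.2 -> nth x P.1 a = nth x P.1 b -> a = b.
  by move=> a b Ha' Hb' /eqP; rewrite nth_uniq ?Hs // => /eqP.
have Hi' : i <= size P.2 by exact: ltnW.
have Hi'' : i.+1 <= size P.2 by [].
have Hj' : j <= size P.2 by exact: ltnW.
have Hj'' : j.+1 <= size P.2 by [].
move: J1 J2; rewrite /joins => /orP [] /eqP -> /orP [] /eqP [] H1 H2.
all: have N := fun a b (Ha : a <= size P.2) (Hb : b <= size P.2) (H : nth x P.1 a = nth x P.1 b) => nu a b Ha Hb H.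
all: first [ have := N _ _ Hi' Hj' H1 | have := N _ _ Hi' Hj' (esym H1)
           | have := N _ _ Hi'' Hj'' H1 | have := N _ _ Hi'' Hj'' (esym H1)
           | have := N _ _ Hi' Hj'' H1 | have := N _ _ Hi' Hj'' (esym H1)
           | have := N _ _ Hi'' Hj' H1 | have := N _ _ Hi'' Hj' (esym H1) ]; move=> E1.
all: first [ have := N _ _ Hi' Hj' H2 | have := N _ _ Hi' Hj' (esym H2)
           | have := N _ _ Hi'' Hj'' H2 | have := N _ _ Hi'' Hj'' (esym H2)
           | have := N _ _ Hi' Hj'' H2 | have := N _ _ Hi' Hj'' (esym H2)
           | have := N _ _ Hi'' Hj' H2 | have := N _ _ Hi'' Hj' (esym H2) ]; move=> E2.
all: clear -E1 E2; lia.
Qed.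

Lemma mem_seg_edge (G : mgraph) (P : gpath G) a b e :
  e \in (seg P a b).2 -> exists k, [/\ a <= k, k < b, k < size P.2 & e = nth e P.2 k].
Proof.
move=> /(nthP e) [i]; rewrite /= size_take size_drop => Hi Hei.
have Hi2 : i < b - a by move: Hi; case: ifP; lia.
have Hi3 : a + i < size P.2 by move: Hi; case: ifP; lia.
exists (a + i); split; try lia.
by rewrite -{1}Hei nth_take // nth_drop.
Qed.

Lemma mem_revp_edge (G : mgraph) (P : gpath G) e :
  e \in (revp P).2 -> exists k, [/\ 0 <= k, k < size P.2, k < size P.2 & e = nth e P.2 k].
Proof.
rewrite /= mem_rev => /(nthP e) [i Hi Hei]; exists i; split => //.
Qed.
Definition cf (r n1 : nat) (I : seq nat) i := if i < r.-1 then nth 0 I i else n1.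


Lemma cf0 r n1 I : 3 <= r -> nth 0 I 0 = 0 -> cf r n1 I 0 = 0.
Proof. by move=> Hr H0; rewrite /cf ifT //; lia. Qed.
Lemma cf_last r n1 I : cf r n1 I r.-1 = n1.
Proof. by rewrite /cf ltnn. Qed.
Lemma cf_in r n1 I i : i < r.-1 -> cf r n1 I i = nth 0 I i.
Proof. by move=> H; rewrite /cf H. Qed.
Lemma cf_le r n1 I i : r <= size I -> (forall k, k \in I -> k <= n1) -> cf r n1 I i <= n1.
Proof.
move=> HI Ilt; rewrite /cf; case: ifP => // /idP Hi.
have HiI : i < size I by lia.
exact: (Ilt _ (mem_nth 0 HiI)).
Qed.
Lemma cf_lt r n1 I i j : 3 <= r -> sorted ltn I -> r <= size I ->
  (forall k, k \in I -> k <= n1) -> i < j -> j < r -> cf r n1 I i < cf r n1 I j.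
Proof.
move=> Hr Is HI Ilt Hij Hj; rewrite /cf.
have Hi : i < r.-1 by lia.
rewrite Hi.
have Hlt : nth 0 I i < nth 0 I r.-1.
  by apply: (sorted_ltn_nth ltn_trans) => //; rewrite inE; lia.
case: ifP => /idP Hj'.
  by apply: (sorted_ltn_nth ltn_trans) => //; rewrite inE; lia.
have HrI : r.-1 < size I by lia.
exact: leq_trans Hlt (Ilt _ (mem_nth 0 HrI)).
Qed.

Lemma d_lt (G : mgraph) (x y : vert G) (P1 P2 : gpath G) (c : nat -> nat) (r : nat) :
  uniq P1.1 -> uniq P2.1 -> size P1.1 = (size P1.2).+1 -> size P2.1 = (size P2.2).+1 ->
  nth x P1.1 0 = x -> nth x P1.1 (size P1.2) = y ->
  nth x P2.1 0 = x -> nth x P2.1 (size P2.2) = y ->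
  aligned x y P1 P2 ->
  (forall i j, i < j -> j < r -> c i < c j) -> (forall i, c i <= size P1.2) ->
  (forall i, i < r -> nth x P1.1 (c i) \in P2.1) ->
  forall i j, i < j -> j < r ->
    index (nth x P1.1 (c i)) P2.1 < index (nth x P1.1 (c j)) P2.1.
Proof.
move=> Hu1 Hu2 Hs1 Hs2 Hh1 Hl1 Hh2 Hl2 Hal clt cle Hin i j Hij Hj.
have Hi : i < r by apply: ltn_trans Hj.
have Hcij := clt i j Hij Hj.
have Hci : c i < size P1.1 by rewrite Hs1 ltnS.
have Hcj : c j < size P1.1 by rewrite Hs1 ltnS.
set u := nth x P1.1 (c i); set v := nth x P1.1 (c j).
have Iu1 : index u P1.1 = c i by rewrite index_uniq.
have Iv1 : index v P1.1 = c j by rewrite index_uniq.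
have uv : u != v.
  by rewrite /u /v nth_uniq // neq_ltn Hcij.
have ix : index x P2.1 = 0.
  by rewrite -{1}Hh2 index_uniq // Hs2.
have iy : index y P2.1 = size P2.2.
  by rewrite -{1}Hl2 index_uniq // Hs2.
have ix1 : index x P1.1 = 0.
  by rewrite -{1}Hh1 index_uniq // Hs1.
have iy1 : index y P1.1 = size P1.2.
  by rewrite -{1}Hl1 index_uniq // Hs1.
have Hu2' := Hin i Hi; have Hv2 := Hin j Hj.
have iu2 : index u P2.1 < (size P2.2).+1 by rewrite -Hs2 index_mem.
have iv2 : index v P2.1 < (size P2.2).+1 by rewrite -Hs2 index_mem.
have inj2 : forall w1 w2, w1 \in P2.1 -> w2 \in P2.1 -> index w1 P2.1 = index w2 P2.1 -> w1 = w2.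
  move=> w1 w2 Hw1 Hw2 E; have H1 := nth_index x Hw1; rewrite E (nth_index x Hw2) in H1; exact: esym H1.
case: (eqVneq u x) => [ux | ux].
  rewrite ux ix lt0n; apply/negP => /eqP v0.
  have : u = v by apply: inj2 => //; rewrite v0 ux ix.
  by move/eqP: uv.
case: (eqVneq v y) => [vy | vy].
  rewrite vy iy; rewrite ltn_neqAle -ltnS iu2 andbT; apply/negP => /eqP E.
  have : u = v by apply: inj2 => //; rewrite E vy iy.
  by move/eqP: uv.
case: (eqVneq u y) => [uy | uy].
  have E : c i = size P1.2 by rewrite -Iu1 uy iy1.
  by have := cle j; rewrite -E leqNgt Hcij.
case: (eqVneq v x) => [vx | vx].
  have E : c j = 0 by rewrite -Iv1 vx ix1.
  by move: Hcij; rewrite E.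
have := Hal u v uv.
rewrite /internal Iu1 Iv1 (mem_nth _ Hci) (mem_nth _ Hcj) Hu2' Hv2 ux uy vx vy /=.
move=> /(_ isT isT isT isT) H.
move: H Hcij; clear; set p := index u P2.1; set q := index v P2.1; move=> H Hcij.
nia.
Qed.

Lemma four (i j : 'I_4) : i != j -> exists k l : 'I_4, [&& k != l, k != i, k != j, l != i & l != j].
Proof.
case: i j => [[|[|[|[|m]]]] Hi] [[|[|[|[|n]]]] Hj] //= _;
by [ exists (@Ordinal 4 0 isT), (@Ordinal 4 1 isT) | exists (@Ordinal 4 0 isT), (@Ordinal 4 2 isT)
   | exists (@Ordinal 4 0 isT), (@Ordinal 4 3 isT) | exists (@Ordinal 4 1 isT), (@Ordinal 4 2 isT)
   | exists (@Ordinal 4 1 isT), (@Ordinal 4 3 isT) | exists (@Ordinal 4 2 isT), (@Ordinal 4 3 isT)].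
Qed.

Lemma ord_last r (i : 'I_r) : ~~ (i < r.-1) -> val i = r.-1.
Proof.
move=> Hi; apply/eqP; rewrite eqn_leq -ltnS prednK ?ltn_ord /=; first by rewrite leqNgt.
by apply: leq_ltn_trans (ltn_ord i).
Qed.

Lemma seg_int (g : nat -> nat) n i1 i2 k :
  (forall i j, i < j -> j < n -> g i < g j) -> i1.+1 < n -> i2.+1 < n ->
  g i1 <= k -> k < g i1.+1 -> g i2 <= k -> k < g i2.+1 -> i1 = i2.
Proof.
move=> glt H1 H2 a1 b1 a2 b2.
case: (ltngtP i1 i2) => // Hc.
- have : g i1.+1 <= g i2.
    case: (ltngtP i1.+1 i2) => [h|h|<-] //; last by lia.
    exact: ltnW (glt _ _ h (ltn_trans (ltnSn _) H2)).
  lia.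
- have : g i2.+1 <= g i1.
    case: (ltngtP i2.+1 i1) => [h|h|<-] //; last by lia.
    exact: ltnW (glt _ _ h (ltn_trans (ltnSn _) H1)).
  lia.
Qed.

Unset Implicit Arguments.

Theorem mainTheorem13 (r : nat) (G : mgraph) (x y : vert G) :
  (3 <= r)%N -> loopless G -> x != y ->
  (exists P : 'I_4 -> gpath G,
     (forall i, is_path x y (P i)) /\
     (forall i j, i != j -> edge_disjoint (P i) (P j)) /\
     (exists i j, [/\ i != j, aligned x y (P i) (P j) & (r <= n_common (P i) (P j))%N])) ->
  immersion (Ctr 2 r) G.
Proof.
move=> Hr _ _ [Q [Hpath [Hdisj [i0 [j0 [Hij Hal Hcom]]]]]].
have [k0 [l0 /and5P [Hkl Hki Hkj Hli Hlj]]] := four Hij.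
have /path_nth [Hs1 Hu1 Hh1 Hl1 Ha1] := Hpath i0.
have /path_nth [Hs2 Hu2 Hh2 Hl2 Ha2] := Hpath j0.
have xin2 : x \in (Q j0).1 by rewrite -Hh2 mem_nth // Hs2.
have yin2 : y \in (Q j0).1 by rewrite -Hl2 mem_nth // Hs2.
have [I [Isort HI Ilt I0 Iin]] : exists I : seq nat, [/\ sorted ltn I, r <= size I,
    forall k, k \in I -> k <= size (Q i0).2, nth 0 I 0 = 0 &
    forall k, k \in I -> nth x (Q i0).1 k \in (Q j0).1].
  exists [seq k <- iota 0 (size (Q i0).1) | nth x (Q i0).1 k \in (Q j0).1]; split.
  - by apply: sorted_filter; [exact: ltn_trans | exact: iota_ltn_sorted].
  - have -> : size [seq k <- iota 0 (size (Q i0).1) | nth x (Q i0).1 k \in (Q j0).1]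
         = size [seq v <- (Q i0).1 | v \in (Q j0).1].
      have E1 : (Q i0).1 = map (nth x (Q i0).1) (iota 0 (size (Q i0).1)).
        by rewrite -/(mkseq _ _) mkseq_nth.
      by rewrite [in RHS]E1 filter_map size_map.
    rewrite -(card_uniqP _); last by rewrite filter_uniq.
    move: Hcom; rewrite /n_common; congr (_ <= _); apply: eq_card => v.
    by rewrite inE mem_filter andbC.
  - move=> k; rewrite mem_filter mem_iota Hs1 => /andP [_]; rewrite add0n ltnS; exact.
  - by rewrite Hs1 /= Hh1 xin2.
  - by move=> k; rewrite mem_filter => /andP [].
pose c := cf r (size (Q i0).2) I.
have c0 : c 0 = 0 by exact: cf0.
have clast : c r.-1 = size (Q i0).2 by exact: cf_last.
have cle : forall i, c i <= size (Q i0).2 by move=> i; exact: cf_le.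
have clt : forall i j, i < j -> j < r -> c i < c j by move=> i j; exact: cf_lt.
have cin : forall i, i < r -> nth x (Q i0).1 (c i) \in (Q j0).1.
  move=> i Hi; case: (ltnP i r.-1) => H.
    rewrite /c cf_in //; apply: Iin; apply: mem_nth.
    by apply: leq_trans H _; apply: leq_trans HI; rewrite leq_pred.
  have -> : i = r.-1 by move: Hi H; clear; lia.
  by rewrite clast Hl1.
pose d i := index (nth x (Q i0).1 (c i)) (Q j0).1.
have dlt : forall i j, i < j -> j < r -> d i < d j.
  exact: (d_lt Hu1 Hu2 Hs1 Hs2 Hh1 Hl1 Hh2 Hl2 Hal clt cle cin).
have dle : forall i, i < r -> d i <= size (Q j0).2.
  by move=> i Hi; rewrite -ltnS -Hs2 index_mem cin.
pose f (i : 'I_r) := nth x (Q i0).1 (c i).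
pose Pm (e : 'I_r * 'I_2) : gpath G :=
  if e.1 < r.-1 then (if e.2 == ord0 then seg (Q i0) (c e.1) (c e.1.+1)
                      else seg (Q j0) (d e.1) (d e.1.+1))
  else (if e.2 == ord0 then revp (Q k0) else revp (Q l0)).
exists f; split.
  move=> i j /eqP; rewrite /f nth_uniq ?Hs1 ?ltnS ?cle // => /eqP Hc.
  apply: val_inj => /=; case: (ltngtP i j) => // H.
  - by move: (clt _ _ H (ltn_ord j)); rewrite Hc ltnn.
  - by move: (clt _ _ H (ltn_ord i)); rewrite Hc ltnn.
exists Pm; split.
  move=> [i b]; rewrite /Pm /f /=.
  case: ifP => [/idP Hi | /negbT Hi].
    have Hi1 : i.+1 < r by move: Hi Hr; clear; lia.
    rewrite modn_small //.
    case: ifP => _.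
      exact: seg_path (Hpath i0) (ltnW (clt _ _ (ltnSn i) Hi1)) (cle _).
    have := seg_path (Hpath j0) (ltnW (dlt _ _ (ltnSn i) Hi1)) (dle _ Hi1).
    by rewrite /d !nth_index ?cin // ltnW.
  have Ei : val i = r.-1.
    by apply/eqP; rewrite eqn_leq -ltnS prednK ?ltn_ord /=; [rewrite leqNgt | apply: leq_ltn_trans (ltn_ord i)].
  have -> : i.+1 %% r = 0 by rewrite Ei prednK ?modnn //; lia.
  rewrite Ei clast c0 Hh1 Hl1.
  by case: ifP => _; apply: revp_path.
pose src (e : 'I_r * 'I_2) : 'I_4 :=
  if e.1 < r.-1 then (if e.2 == ord0 then i0 else j0) else (if e.2 == ord0 then k0 else l0).
pose lo (e : 'I_r * 'I_2) : nat :=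
  if e.1 < r.-1 then (if e.2 == ord0 then c e.1 else d e.1) else 0.
pose hi (e : 'I_r * 'I_2) : nat :=
  if e.1 < r.-1 then (if e.2 == ord0 then c e.1.+1 else d e.1.+1) else size (Q (src e)).2.
have memP : forall e z, z \in (Pm e).2 ->
    exists k, [/\ lo e <= k, k < hi e, k < size (Q (src e)).2 & z = nth z (Q (src e)).2 k].
  move=> e z; rewrite /Pm /lo /hi /src.
  by case: ifP => _; case: ifP => _; [apply: mem_seg_edge | apply: mem_seg_edge
    | apply: mem_revp_edge | apply: mem_revp_edge].
have same : forall e1 e2 k, src e1 = src e2 -> lo e1 <= k -> k < hi e1 ->
    lo e2 <= k -> k < hi e2 -> e1 = e2.
{ move=> [i1 b1] [i2 b2] k; rewrite /src /lo /hi /=.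
  case: b1 => m1 p1; case: m1 p1 => [|[|m1]] p1 //; case: b2 => m2 p2; case: m2 p2 => [|[|m2]] p2 //=.
  all: case: ifP => [/idP H1 | /negbT H1]; case: ifP => [/idP H2 | /negbT H2].
  all: try (move=> E; first [ (rewrite E eqxx in Hij; done) | (rewrite E eqxx in Hki; done)
     | (rewrite E eqxx in Hkj; done) | (rewrite E eqxx in Hli; done)
     | (rewrite E eqxx in Hlj; done) | (rewrite E eqxx in Hkl; done) ]).
  - move=> _ a1 b1 a2 b2.
    have H1' : i1.+1 < r by rewrite -ltn_predRL.
    have H2' : i2.+1 < r by rewrite -ltn_predRL.
    have E := seg_int clt H1' H2' a1 b1 a2 b2.
    by congr pair; [exact: ord_inj E | exact: ord_inj].
  - move=> _ _ _ _ _.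
    congr pair; last exact: ord_inj.
    by apply: ord_inj; rewrite (ord_last H1) (ord_last H2).
  - move=> _ a1 b1 a2 b2.
    have H1' : i1.+1 < r by rewrite -ltn_predRL.
    have H2' : i2.+1 < r by rewrite -ltn_predRL.
    have E := seg_int dlt H1' H2' a1 b1 a2 b2.
    by congr pair; [exact: ord_inj E | exact: ord_inj].
  - move=> _ _ _ _ _.
    congr pair; last exact: ord_inj.
    by apply: ord_inj; rewrite (ord_last H1) (ord_last H2). }
clearbody hi lo src Pm.
move=> e1 e2 Hne; apply/allP => z Hz1; apply/negP => Hz2.
have [k1 [L1 U1 S1 E1]] := memP _ _ Hz1.
have [k2 [L2 U2 S2 E2]] := memP _ _ Hz2.
case: (eqVneq (src e1) (src e2)) => Es.
  rewrite -Es in S2 E2.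
  have Hk : k1 = k2.
    apply/eqP; rewrite -(nth_uniq z S1 S2 (path_uniq_edges (Hpath (src e1)))).
    by rewrite -E1 -E2.
  rewrite -Hk in L2 U2.
  by move/eqP: Hne; apply; apply: (same _ _ k1).
have := Hdisj _ _ Es => /allP /(_ z).
have -> : z \in (Q (src e1)).2 by rewrite {1}E1 mem_nth.
move=> /(_ isT); rewrite {1}E2 mem_nth //.
Qed.
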